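(* If $G$ is an $\alpha_i$-metric graph ($i\ge 0$ an integer), then its interval thinness is at most $i+1$; that is, for all vertices $u,v$ and every integer $k$ with $0<k<d(u,v)$, any two vertices $x,y\in I(u,v)$ with $d(u,x)=d(u,y)=k$ satisfy $d(x,y)\le i+1$.
   Context: All graphs are finite, connected, unweighted, undirected, simple; $d(u,v)$ is the shortest-path distance. $I(u,v)=\{x: d(u,x)+d(x,v)=d(u,v)\}$. A graph is $\alpha_i$-metric if for all vertices $u,v,w,x$: whenever $v\in I(u,w)$, $w\in I(v,x)$ and $v,w$ are adjacent, then $d(u,x)\ge d(u,v)+d(v,x)-i$. *)

(* Defs.v *)
(* A finite simple graph is a symmetric irreflexive relation
   e : rel T on a finType T. *)
From mathcomp Require Import all_boot.
Set Implicit Arguments. Unset Strict Implicit. Unset Printing Implicit Defensive.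

Section Graph.
Variables (T : finType) (e : rel T).

Definition walkn (u v : T) (n : nat) : bool :=
  [exists p : n.-tuple T, path e u p && (last u p == v)].

(* shortest-path distance: least n such that a walk of length n from u to v
   exists (searched in 0..#|T|-1, which suffices in a connected graph). *)
Definition dist (u v : T) : nat := find (walkn u v) (iota 0 #|T|).

Definition graph_connected : Prop := forall u v : T, connect e u v.

Definition interval (u v x : T) : bool := dist u x + dist x v == dist u v.

Definition alpha_metric (i : nat) : Prop :=
  forall u v w x : T,
    interval u w v -> interval v x w -> e v w ->
    dist u v + dist v x - i <= dist u x.
End Graph.

(* Main.v *)
Require Import Defs.
From mathcomp Require Import all_boot.
From mathcomp Require Import zify.

Section Aux.
Variables (T : finType) (e : rel T).
Hypothesis esym : symmetric e.
Hypothesis eirr : irreflexive e.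
Hypothesis econ : graph_connected e.

Lemma walknP u v n :
  reflect (exists p : seq T, [/\ size p = n, path e u p & last u p = v])
          (walkn e u v n).
Proof.
apply: (iffP existsP).
  move=> [p /andP [Hp /eqP Hl]]; exists (val p); split => //; exact: size_tuple.
move=> [p [Hs Hp Hl]]; subst n; exists (in_tuple p); by rewrite /= Hp Hl eqxx.
Qed.

Lemma walk_small u v : exists2 n, n < #|T| & walkn e u v n.
Proof.
have /connectP [p Hp Hl] := econ u v.
move: Hl; case: (shortenP Hp) => p' Hp' Hu _ Hl'.
exists (size p'); last by apply/walknP; exists p'; split.
have := max_card (mem (u :: p')).
by rewrite (card_uniqP Hu).
Qed.

Lemma dist_walk u v : walkn e u v (dist e u v).
Proof.
case: (walk_small u v) => n Hn Hw.
have Hh : has (walkn e u v) (iota 0 #|T|).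
  by apply/hasP; exists n => //; rewrite mem_iota.
have := nth_find 0 Hh.
rewrite nth_iota //; last first.
  have := Hh; rewrite has_find size_iota //.
Qed.

Lemma dist_min u v n : walkn e u v n -> dist e u v <= n.
Proof.
move=> Hw.
have Hd : dist e u v < #|T|.
  case: (walk_small u v) => m Hm Hw'.
  have Hh : has (walkn e u v) (iota 0 #|T|).
    by apply/hasP; exists m => //; rewrite mem_iota.
  by have := Hh; rewrite has_find size_iota.
case: (ltnP n #|T|) => Hn; last by apply: leq_trans (ltnW Hd) Hn.
rewrite leqNgt; apply/negP => Hlt.
have := before_find 0 Hlt.
by rewrite nth_iota // Hw.
Qed.

Lemma walk0 u : walkn e u u 0.
Proof. by apply/walknP; exists [::]. Qed.

Lemma walk1 u v : e u v -> walkn e u v 1.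
Proof. by move=> H; apply/walknP; exists [:: v]; rewrite /= H. Qed.

Lemma walk_cat u v w m n : walkn e u v m -> walkn e v w n -> walkn e u w (m + n).
Proof.
move=> /walknP [p [Hs Hp Hl]] /walknP [q [Hs' Hq Hl']].
apply/walknP; exists (p ++ q); split.
- by rewrite size_cat Hs Hs'.
- by rewrite cat_path Hp Hl Hq.
- by rewrite last_cat Hl.
Qed.

Lemma walk_rev u v n : walkn e u v n -> walkn e v u n.
Proof.
move=> /walknP [p [Hs Hp Hl]].
apply/walknP; exists (rev (belast u p)); split.
- by rewrite size_rev size_belast.
- rewrite -Hl rev_path.
  by apply: (sub_path _ Hp) => a b /=; rewrite esym.
- by case: p Hs Hp Hl => [|a p] //= _ _ _; rewrite rev_cons last_rcons.
Qed.

Lemma dist_sym u v : dist e u v = dist e v u.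
Proof.
apply/eqP; rewrite eqn_leq; apply/andP; split; apply: dist_min; apply: walk_rev;
  exact: dist_walk.
Qed.

Lemma dist_tri u v w : dist e u w <= dist e u v + dist e v w.
Proof. by apply: dist_min; apply: walk_cat; apply: dist_walk. Qed.

Lemma dist_xx u : dist e u u = 0.
Proof. by apply/eqP; rewrite -leqn0; apply: dist_min; apply: walk0. Qed.

Lemma dist0 u v : dist e u v = 0 -> u = v.
Proof. by move=> H; have := dist_walk u v; rewrite H => /walknP [[|a p] [//= _ _ ->]]. Qed.

Lemma dist_edge u v : e u v -> dist e u v = 1.
Proof.
move=> H; have : dist e u v <= 1 by apply: dist_min; apply: walk1.
case: (dist e u v) (@dist0 u v) => [|[|n]] // /(_ erefl) E.
by subst v; rewrite eirr in H.
Qed.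

Lemma dist_step x v n : dist e x v = n.+1 ->
  exists x', e x x' /\ dist e x' v = n.
Proof.
move=> H; have := dist_walk x v; rewrite H => /walknP [[|a p] [//= [Hs] /andP [Hxa Hp] Hl]].
exists a; split => //.
have Hle : dist e a v <= n by apply: dist_min; apply/walknP; exists p.
have := dist_tri x a v; rewrite (@dist_edge x a Hxa) H; lia.
Qed.

Theorem lemma2_gen (i : nat) :
  alpha_metric e i ->
  forall (u v : T) n k, k + n = dist e u v ->
  forall x y : T, interval e u v x -> interval e u v y ->
    dist e u x = k -> dist e u y = k ->
    dist e x y <= i.+1.
Proof.
move=> Ha u v n; elim: n => [|n IH] k Hk x y /eqP Ix /eqP Iy Hx Hy.
  have Hxv : dist e x v = 0 by lia.
  have Hyv : dist e y v = 0 by lia.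
  by rewrite (@dist0 x v Hxv) (@dist0 y v Hyv) dist_xx.
have [x' [Exx' Hx'v]] : exists x', e x x' /\ dist e x' v = n.
  by apply: dist_step => //; lia.
have [y' [Eyy' Hy'v]] : exists y', e y y' /\ dist e y' v = n.
  by apply: dist_step => //; lia.
have Hux' : dist e u x' = k.+1.
  have := dist_tri u x x'; have := dist_tri u x' v; rewrite (@dist_edge x x' Exx'); lia.
have Huy' : dist e u y' = k.+1.
  have := dist_tri u y y'; have := dist_tri u y' v; rewrite (@dist_edge y y' Eyy'); lia.
have IH' : dist e x' y' <= i.+1.
  apply: (IH k.+1) => //; try lia; rewrite /interval; apply/eqP; lia.
have Hyy' : dist e y' y = 1 by rewrite (@dist_edge y' y) // esym.
have Hxx' : dist e x x' = 1 by rewrite (@dist_edge x x').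
have HA : dist e x' y <= i.+1.
  have := dist_tri x' y' y; rewrite Hyy' => Ht.
  case: (ltnP (dist e x' y') (dist e x' y)) => Hc; last by lia.
  have := Ha x' y' y u.
  rewrite /interval.
  have -> : dist e x' y' + dist e y' y == dist e x' y by apply/eqP; lia.
  have -> : dist e y' y + dist e y u == dist e y' u.
    by apply/eqP; rewrite (dist_sym y u) (dist_sym y' u); lia.
  rewrite esym Eyy' (dist_sym y' u) (dist_sym x' u) => /(_ isT isT isT).
  lia.
have := dist_tri x x' y; rewrite Hxx' => Ht.
case: (ltnP (dist e x' y) (dist e x y)) => Hc; last by lia.
have := Ha u x x' y.
rewrite /interval.
have -> : dist e u x + dist e x x' == dist e u x' by apply/eqP; lia.
have -> : dist e x x' + dist e x' y == dist e x y by apply/eqP; lia.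
rewrite Exx' => /(_ isT isT isT).
lia.
Qed.
End Aux.

Theorem lemma2 (T : finType) (e : rel T) (i : nat) :
  symmetric e -> irreflexive e -> graph_connected e ->
  alpha_metric e i ->
  forall (u v : T) (k : nat), 0 < k < dist e u v ->
  forall x y : T, interval e u v x -> interval e u v y ->
    dist e u x = k -> dist e u y = k ->
    dist e x y <= i.+1.
Proof.
move=> esym eirr econ Ha u v k Hk x y Ix Iy Hx Hy.
apply: (@lemma2_gen T e esym eirr econ i Ha u v (dist e u v - k) k) => //.
lia.
Qed.
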